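(* Let $\mathcal X\subseteq[0,1]$ be a Borel set with $0,1\in\mathcal X$, fix $\mu\in(0,1)$, and let $\mathcal H_\mu=\{P\in\mathcal P_{\mathcal X}:\mathbb E_P[X]=\mu\}$. Define $F_\mu:\mathcal X\to[1,+\infty)$ by $F_\mu(x)=1+\frac1\mu(x-\mu)$ if $x\ge\mu$ and $F_\mu(x)=1+\frac1{\mu-1}(x-\mu)$ if $x<\mu$. Then for any $x\in\mathcal X$ there is $P_x\in\mathcal H_\mu$ such that $P_x(\{x\})=1/F_\mu(x)>0$. Moreover, $F_\mu(x)\ge E(x)$ for all $x\in\mathcal X$ and every e-variable $E$ for $\mathcal H_\mu$.
   Context: $\mathcal P_{\mathcal X}$ is the set of Borel probability measures on $\mathcal X$. An e-variable for $\mathcal H_\mu$ is a Borel $E:\mathcal X\to[0,+\infty)$ with $\mathbb E_P[E]\le1$ for all $P\in\mathcal H_\mu$. *)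

(* Defs.v *)
From HB Require Import structures.
From mathcomp Require Import all_boot all_order all_algebra.
From mathcomp Require Import all_classical all_reals all_analysis.
Set Implicit Arguments. Unset Strict Implicit. Unset Printing Implicit Defensive.
Import Order.TTheory GRing.Theory Num.Theory.
Local Open Scope classical_set_scope.
Local Open Scope ring_scope.

(* A Borel probability measure on the Borel set X ⊆ R is represented as a
   Borel probability measure on R concentrated on X (P (~` X) = 0). *)
Definition prob_on {R : realType} (X : set R) (P : probability R R) : Prop :=
  P (~` X) = 0%E.

Definition H_mu {R : realType} (X : set R) (mu : R) (P : probability R R) : Prop :=
  prob_on X P /\ (\int[P]_(x in X) (x%:E) = mu%:E)%E.

Definition evariable {R : realType} (X : set R) (mu : R) (E : R -> R) : Prop :=
  measurable_fun X E /\ (forall x, X x -> 0 <= E x) /\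
  forall P : probability R R, H_mu X mu P -> (\int[P]_(x in X) (E x)%:E <= 1)%E.

Definition F_mu {R : realType} (mu x : R) : R :=
  if mu <= x then 1 + mu^-1 * (x - mu) else 1 + (mu - 1)^-1 * (x - mu).

(* Main.v *)
From HB Require Import structures.
From mathcomp Require Import all_boot all_order all_algebra.
From mathcomp Require Import all_classical all_reals all_analysis.
From mathcomp Require Import measurable_realfun.
From mathcomp Require Import ring lra.
Require Import Defs.
Import Order.TTheory GRing.Theory Num.Theory.
Local Open Scope classical_set_scope.
Local Open Scope ring_scope.

Lemma q0_of {R : realType} {p : R} : p <= 1 -> 0 <= 1 - p.
Proof. by rewrite subr_ge0. Qed.

Definition mixm {R : realType} (p a b : R) (p0 : 0 <= p) (p1 : p <= 1) :
  {measure set R -> \bar R} :=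
  measure_add (mscale (NngNum p0) (@dirac _ R a R))
              (mscale (NngNum (q0_of p1)) (@dirac _ R b R)).

Section mix.
Context {R : realType} (p : R) (a b : R).
Definition mix (A : set R) : \bar R :=
  if (0 <= p) && (p <= 1) then (p%:E * \d_a A + (1-p)%:E * \d_b A)%E else \d_a A.
Lemma mixE (p0 : 0 <= p) (p1 : p <= 1) : mix = mixm p a b p0 p1.
Proof.
apply/funext => A; rewrite /mix p0 p1 /mixm /= /msum 2!big_ord_recl/= big_ord0 adde0.
by [].
Qed.
Lemma mixN : ~~ ((0 <= p) && (p <= 1)) -> mix = \d_a.
Proof. by move=> h; apply/funext => A; rewrite /mix (negbTE h). Qed.
Let mix0 : mix set0 = 0%E.
Proof.
case: (boolP ((0 <= p) && (p <= 1))) => [/andP[p0 p1]|h].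
  by rewrite (mixE p0 p1) measure0.
by rewrite (mixN h) measure0.
Qed.
Let mix_ge0 A : (0 <= mix A)%E.
Proof.
case: (boolP ((0 <= p) && (p <= 1))) => [/andP[p0 p1]|h].
  by rewrite (mixE p0 p1) measure_ge0.
by rewrite (mixN h) measure_ge0.
Qed.
Let mix_sa : semi_sigma_additive mix.
Proof.
case: (boolP ((0 <= p) && (p <= 1))) => [/andP[p0 p1]|h].
  rewrite (mixE p0 p1); exact: measure_semi_sigma_additive.
rewrite (mixN h); exact: measure_semi_sigma_additive.
Qed.
HB.instance Definition _ := isMeasure.Build _ _ _ mix mix0 mix_ge0 mix_sa.
Let mix_setT : mix setT = 1%E.
Proof.
rewrite /mix; case: ifP => _; last by rewrite diracT.
by rewrite !diracT !mule1 -EFinD addrC subrK.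
Qed.
HB.instance Definition _ := @Measure_isProbability.Build _ _ R mix mix_setT.

Lemma mix_int (p0 : 0 <= p) (p1 : p <= 1) (D : set R) (f : R -> \bar R) :
  measurable D -> measurable_fun D f ->
  (forall x, D x -> 0 <= f x)%E ->
  (\int[mix]_(x in D) f x = p%:E * (\d_a D * f a) + (1-p)%:E * (\d_b D * f b))%E.
Proof.
move=> mD mf f0.
rewrite (@eq_measure_integral _ _ _ _ (mixm p a b p0 p1)); last first.
  by move=> A _ _; exact: (congr1 (fun g => g A) (mixE p0 p1)).
by rewrite ge0_integral_measure_add // !ge0_integral_mscale // !integral_dirac.
Qed.
End mix.
Lemma key (R : realType) (X : set R) (mu x : R) :
  X `<=` `[0, 1] -> X 0 -> X 1 -> 0 < mu < 1 -> X x ->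
  0 < (F_mu mu x)^-1 <= 1 /\
  exists b, X b /\ b <> x /\ (F_mu mu x)^-1 * x + (1 - (F_mu mu x)^-1) * b = mu.
Proof.
move=> sX X0 X1 /andP[mu0 mu1] Xx.
have /andP[x0 x1] : 0 <= x <= 1.
  by have := sX _ Xx; rewrite /= in_itv.
rewrite /F_mu; case: ifPn => hx.
- have xp : 0 < x by apply: lt_le_trans hx.
  have -> : 1 + mu^-1 * (x - mu) = x / mu by field; lra.
  rewrite invf_div; split.
    by apply/andP; split; [apply: divr_gt0|rewrite ler_pdivrMr // mul1r].
  exists 0; split => //; split; first by move=> h; move: xp; rewrite -h ltxx.
  by rewrite mulr0 addr0 -mulrA mulVf ?mulr1 // gt_eqF.
- rewrite -ltNge in hx.
  have -> : 1 + (mu - 1)^-1 * (x - mu) = (1 - x) / (1 - mu) by field; lra.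
  rewrite invf_div; split.
    apply/andP; split; first by apply: divr_gt0; lra.
    by rewrite ler_pdivrMr ?mul1r; lra.
  exists 1; split => //; split; first by move=> h; move: hx; rewrite -h; lra.
  rewrite mulr1; field; lra.
Qed.

Theorem lemma3 (R : realType) (X : set R) (mu : R) :
  measurable X -> X `<=` `[0, 1] -> X 0 -> X 1 -> 0 < mu < 1 ->
  (forall x, X x ->
     exists P : probability R R,
       H_mu X mu P /\ P [set x] = ((F_mu mu x)^-1)%:E /\ 0 < (F_mu mu x)^-1) /\
  (forall E : R -> R, evariable X mu E -> forall x, X x -> E x <= F_mu mu x).
Proof.
move=> mX sX X0 X1 mu01.
have main : forall x, X x -> exists b, exists (p0 : 0 <= (F_mu mu x)^-1) (p1 : (F_mu mu x)^-1 <= 1),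
   X b /\ b <> x /\ H_mu X mu (mix (F_mu mu x)^-1 x b) /\
   (mix (F_mu mu x)^-1 x b) [set x] = ((F_mu mu x)^-1)%:E /\ 0 < (F_mu mu x)^-1.
  move=> x Xx.
  have [/andP[pg0 p1] [b [Xb [bx hb]]]] := @key _ _ _ _ sX X0 X1 mu01 Xx.
  have p0 := ltW pg0.
  exists b, p0, p1; split => //; split => //; split; last split => //.
  - split.
      rewrite /prob_on /= /mix p0 p1 /= !diracE !memNset ?mule0 ?adde0 //.
    rewrite (mix_int _ _ _ p0 p1) //; last first.
      all: try exact: EFin_measurable.
      all: try by move=> y Xy; rewrite lee_fin; have := sX _ Xy; rewrite /= in_itv => /andP[].
    by rewrite !diracE !mem_set // !mul1e -!EFinM -EFinD hb.
  - rewrite /= /mix p0 p1 /= !diracE (mem_set (_ : [set x] x)) // (memNset (_ : ~ [set x] b)) //= ?mule1 ?mule0 ?adde0 //.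
split.
  move=> x Xx; have [b [p0 [p1 [_ [_ [H1 [H2 H3]]]]]]] := main x Xx.
  by exists (mix (F_mu mu x)^-1 x b).
move=> E [mE [E0 HE]] x Xx.
have [b [p0 [p1 [Xb [_ [H1 [H2 H3]]]]]]] := main x Xx.
have := HE _ H1.
rewrite (mix_int _ _ _ p0 p1) //; last first.
  all: try exact/(measurable_EFinP X E).
  all: try by move=> y Xy; rewrite lee_fin; apply: E0.
rewrite !diracE !mem_set // !mul1e -!EFinM -EFinD lee_fin => h.
have h2 : (F_mu mu x)^-1 * E x <= 1.
  apply: le_trans h; rewrite lerDl; apply: mulr_ge0; last exact: E0.
  by rewrite subr_ge0.
by rewrite -(ler_pM2l H3) mulVf ?gt_eqF // -invr_gt0.
Qed.
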